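(* Let $r\ge 3$ and $n\ge\frac{(r-1)(2r+1)}{2}$, and let $\mathcal{H}$ be an $n$-vertex $\mathrm{T}_r$-free $r$-graph with $\delta_{r-1}^{+}(\mathcal{H})>\frac{2n}{2r+1}$. Let $V_1,\ldots,V_r\subseteq V(\mathcal{H})$ be pairwise disjoint sets, each independent in $\mathcal{H}$, with $|V_i|>\frac{2n}{2r+1}$ for all $i\in[r]$, and let $Z=V(\mathcal{H})\setminus(V_1\cup\cdots\cup V_r)$. Let $v\in Z$ and, for $i\in[r]$, let $$L_i=\{e\in L_{\mathcal{H}}(v)\colon |e\cap V_j|=1\text{ for every } j\in[r]\setminus\{i\}\}.$$ Then at most one of the sets $L_1,\ldots,L_r$ is nonempty.
   Context: An $r$-graph $\mathcal{H}$ is a collection of $r$-subsets (edges) of a finite vertex set $V(\mathcal{H})$. The shadow is $\partial\mathcal{H}=\{e\in\binom{V(\mathcal{H})}{r-1}\colon e\subseteq E \text{ for some } E\in\mathcal{H}\}$. For $e\in\partial\mathcal{H}$, $N_{\mathcal{H}}(e)=\{u\in V(\mathcal{H})\colon e\cup\{u\}\in\mathcal{H}\}$. The minimum positive codegree is $\delta_{r-1}^{+}(\mathcal{H})=\min\{|N_{\mathcal{H}}(e)|\colon e\in\partial\mathcal{H}\}$. The link of a vertex $v$ is $L_{\mathcal{H}}(v)=\{e\in\partial\mathcal{H}\colon e\cup\{v\}\in\mathcal{H}\}$. A set $I\subseteq V(\mathcal{H})$ is independent in $\mathcal{H}$ if every edge contains at most one vertex of $I$. The $r$-uniform generalized triangle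 is $\mathrm{T}_r=\{\{1,\ldots,r-1,r\},\{1,\ldots,r-1,r+1\},\{r,r+1,\ldots,2r-1\}\}$; $\mathcal{H}$ is $\mathrm{T}_r$-free if it contains no subhypergraph isomorphic to $\mathrm{T}_r$. *)

(* Defs.v *)
From mathcomp Require Import all_boot.

Set Implicit Arguments. Unset Strict Implicit. Unset Printing Implicit Defensive.

Section Hyp.
Variable T : finType.
Implicit Types (H : {set {set T}}) (e E : {set T}) (I : {set T}).

Definition uniform (r : nat) H := forall E, E \in H -> #|E| = r.

Definition shadow (r : nat) H : {set {set T}} :=
  [set e : {set T} | (#|e| == r.-1) && [exists E in H, e \subset E]].

Definition nbhd H e : {set T} := [set u | (e :|: [set u]) \in H].

(* "P (delta^+_{r-1}(H))" for an upward-closed P is expressed as: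
   P |N_H(e)| for every e in the shadow (delta^+ is the minimum of these). *)
Definition mincodeg_sat (r : nat) H (P : nat -> Prop) :=
  forall e, e \in shadow r H -> P #|nbhd H e|.

Definition link (r : nat) H (v : T) : {set {set T}} :=
  [set e in shadow r H | (e :|: [set v]) \in H].

Definition independent H I := forall E, E \in H -> #|E :&: I| <= 1.

(* H contains a copy of the generalized triangle T_r:
   edges A = S+{a}, B = S+{b}, C containing a,b and disjoint from S,
   where S = A :&: B has size r-1. *)
Definition Tr_free (r : nat) H :=
  ~ exists A B C, [/\ [&& A \in H, B \in H & C \in H],
     #|A :&: B| = r.-1,
     (A :\: B) :|: (B :\: A) \subset C &
     C :&: (A :&: B) = set0].
End Hyp.

(* Main.v *)
Require Import Defs.
From mathcomp Require Import all_boot zify.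
Set Implicit Arguments. Unset Strict Implicit. Unset Printing Implicit Defensive.

Lemma predD (r x : nat) : r = true + x -> x = r.-1.
Proof. by move=> ->. Qed.

Lemma small_ar (r x : nat) : 0 < r -> x <= r.-1 -> r <= x -> False.
Proof. lia. Qed.

Section H.
Variable T : finType.
Variable r : nat.
Variable H : {set {set T}}.
Hypothesis r0 : 0 < r.
Hypothesis Hu : uniform r H.
Hypothesis Htr : Tr_free r H.
Hypothesis Hcod : forall D, D \in shadow r H -> r <= #|nbhd H D|.

Lemma shadow_card (S : {set T}) : S \in shadow r H -> #|S| = r.-1.
Proof. by rewrite inE => /andP[/eqP]. Qed.

Lemma nbhd_notin (S : {set T}) w : #|S| = r.-1 -> w \in nbhd H S -> w \notin S.
Proof.
move=> cS; rewrite inE => Hw; apply/negP => wS.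
have := Hu Hw; rewrite (setUidPl _) ?sub1set // cS; lia.
Qed.

Lemma shadow_sub (S C : {set T}) : C \in H -> S \subset C -> #|S| = r.-1 -> S \in shadow r H.
Proof.
move=> CH SC cS; rewrite inE cS eqxx /=; apply/existsP; exists C; by rewrite CH.
Qed.

Lemma key_base (S C : {set T}) u w : S \in shadow r H -> u \in nbhd H S -> w \in nbhd H S ->
  u != w -> C \in H -> u \in C -> w \in C -> C :&: S = set0 -> False.
Proof.
move=> Ssh uN wN uw CH uC wC CS.
have cS := shadow_card Ssh.
have uS := nbhd_notin cS uN; have wS := nbhd_notin cS wN.
apply: Htr; exists (S :|: [set u]), (S :|: [set w]), C.
have AB : (S :|: [set u]) :&: (S :|: [set w]) = S.
  apply/setP => x; rewrite !inE; case xS: (x \in S) => //=.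
  apply/negP => /andP[/eqP xu /eqP xw]; move/eqP: uw; apply; by rewrite -xu -xw.
rewrite AB; split => //.
- by rewrite inE in uN; rewrite inE in wN; rewrite uN wN CH.
- apply/subsetP => x; rewrite !inE.
  case xS: (x \in S) => /=; first by []. by case/orP => /andP[_ /eqP ->].
Qed.

Lemma key (S C : {set T}) u w : S \in shadow r H -> u \in nbhd H S -> w \in nbhd H S ->
  u != w -> C \in H -> u \in C -> w \in C -> False.
Proof.
move=> Ssh uN wN uw.
have cS := shadow_card Ssh.
have uS := nbhd_notin cS uN; have wS := nbhd_notin cS wN.
move: {2}#|C :&: S| (leqnn #|C :&: S|) => k; elim: k C => [|k IH] C.
  rewrite leqn0 cards_eq0 => /eqP CS CH uC wC; exact: (key_base Ssh uN wN uw CH uC wC CS).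
move=> ck CH uC wC.
have [CS0|] := eqVneq (C :&: S) set0; first exact: (key_base Ssh uN wN uw CH uC wC CS0).
case/set0Pn => s; rewrite inE => /andP[sC sS].
have cC := Hu CH.
have cD : #|C :\ s| = r.-1 by apply: predD; have := cardsD1 s C; rewrite sC cC.
have Dsh : C :\ s \in shadow r H by apply: (shadow_sub CH) => //; exact: subD1set.
have := Hcod Dsh.
case: (boolP (nbhd H (C :\ s) \subset S)) => [sub|/subsetPn [z zN zS]].
  by move/subset_leq_card: sub; rewrite cS => h1 h2; exact: (small_ar r0 h1 h2).
move=> _.
have us : u != s by apply: contraNneq uS => ->.
have ws : w != s by apply: contraNneq wS => ->.
apply: (IH ((C :\ s) :|: [set z])).
- have sub : ((C :\ s) :|: [set z]) :&: S \subset (C :&: S) :\ s.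
    apply/subsetP => x; rewrite !inE.
    case: (x =P z) => [->|_]; rewrite ?(negbTE zS) ?andbF ?orbF //.
    by move=> /andP[/andP[-> ->] ->].
  have := subset_leq_card sub.
  have := cardsD1 s (C :&: S); rewrite inE sC sS /= => h1 h2.
  apply: leq_trans h2 _; rewrite -ltnS; move: ck; rewrite h1 add1n; exact.
- by rewrite inE in zN.
- by rewrite !inE us uC.
- by rewrite !inE ws wC.
Qed.
End H.

Lemma disjP (T : finType) (A B : {set T}) :
  (forall x, x \in A -> x \in B -> False) -> [disjoint A & B].
Proof.
move=> h; rewrite -setI_eq0; apply/eqP/setP => x; rewrite !inE.
by apply/negP => /andP[a b]; exact: h x a b.
Qed.

Lemma card_disj (T : finType) (I : finType) (F : I -> {set T}) :
  (forall i j, i != j -> [disjoint F i & F j]) -> #|\bigcup_i F i| = \sum_i #|F i|.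
Proof.
move=> dF; rewrite -sum1_card (partition_disjoint_bigcup _ _ dF).
by apply: eq_bigr => i _; rewrite sum1_card.
Qed.

Lemma indep_nbhd (T : finType) r (H : {set {set T}}) (e W : {set T}) w :
  0 < r -> uniform r H -> independent H W -> #|e| = r.-1 -> w \in nbhd H e -> w \in W ->
  #|e :&: W| = 1 -> False.
Proof.
move=> r0 Hu HW ce wN wW c1.
have we := nbhd_notin r0 Hu ce wN.
have := HW _ (eq_ind _ _ wN _ (in_set _ _)).
have sub : w |: (e :&: W) \subset (e :|: [set w]) :&: W.
  apply/subsetP => x; rewrite !inE; case: (x =P w) => [->|_] /=; first by rewrite wW orbT.
  by case/andP => -> ->.
have := subset_leq_card sub; rewrite cardsU1 c1 inE (negbTE we) /= => h1 h2.
by have := leq_trans h1 h2.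
Qed.

Lemma arith (r n a b ne nf d cb u uef : nat) : 3 <= r ->
  2 * n < (2 * r + 1) * ne -> 2 * n < (2 * r + 1) * nf ->
  (r - 1) * (2 * n + 1) <= (2 * r + 1) * a -> r * (2 * n + 1) <= (2 * r + 1) * b ->
  u <= n -> u = a + uef -> uef + d = ne + nf -> d <= cb -> b + cb = n -> False.
Proof.
move=> r3 he hf ha hb hu h1 h2 h3 h4.
have k : a + ne + nf + b <= 2 * n by lia.
have := leq_mul2l (2 * r + 1) (a + ne + nf + b) (2 * n); rewrite k orbT => k2.
rewrite !mulnDr in k2.
lia.
Qed.

Unset Implicit Arguments.

Theorem claim2p5 (T : finType) (r : nat) (H : {set {set T}})
    (V : 'I_r -> {set T}) (v : T) :
  3 <= r ->
  (r - 1) * (2 * r + 1) <= 2 * #|T| ->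
  uniform r H ->
  Tr_free r H ->
  mincodeg_sat r H (fun d => 2 * #|T| < (2 * r + 1) * d) ->
  (forall i j, i != j -> [disjoint V i & V j]) ->
  (forall i, independent H (V i)) ->
  (forall i, 2 * #|T| < (2 * r + 1) * #|V i|) ->
  v \in ~: (\bigcup_i V i) ->
  let L := fun i : 'I_r =>
    [set e in link r H v | [forall j, (j != i) ==> (#|e :&: V j| == 1)]] in
  forall i j, L i != set0 -> L j != set0 -> i = j.
Proof.
move=> r3 hn Hu Htr Hcod Hdisj Hind HV vZ L i j.
set n := #|T| in hn Hcod HV *.
have r0 : 0 < r by apply: leq_trans r3.
have Hcod' : forall D, D \in shadow r H -> r <= #|nbhd H D|.
  move=> D /Hcod; move: #|nbhd H D| => d hd.
  rewrite leqNgt; apply/negP => hdr.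
  have : (2 * r + 1) * d <= (2 * r + 1) * (r - 1) by rewrite leq_mul2l; apply/orP; right; lia.
  rewrite mulnC in hn; lia.
have key' := key r0 Hu Htr Hcod'.
case: (eqVneq i j) => // ij Li Lj.
case/set0Pn: Li => e; rewrite inE => /andP[eL /forallP eV].
case/set0Pn: Lj => f; rewrite inE => /andP[fL /forallP fV].
rewrite inE in eL; case/andP: eL => esh eH.
rewrite inE in fL; case/andP: fL => fsh fH.
have ce := shadow_card esh; have cf := shadow_card fsh.
have veN : v \in nbhd H e by rewrite inE.
have vfN : v \in nbhd H f by rewrite inE.
have ve := nbhd_notin r0 Hu ce veN.
pose E := e :|: [set v].
have cE : #|E| = r := Hu _ eH.
have xE : forall x, x \in e -> x \in E by move=> x xe; rewrite !inE xe.
have cEx : forall x, x \in e -> #|E :\ x| = r.-1.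
  by move=> x /xE xe; apply: predD; have := cardsD1 x E; rewrite xe cE.
have Exsh : forall x, x \in e -> E :\ x \in shadow r H.
  by move=> x xe; apply: (shadow_sub eH); [exact: subD1set | exact: cEx].
pose F x := if x \in e then nbhd H (E :\ x) else set0.
have disjF : forall x y, x != y -> [disjoint F x & F y].
  move=> x y xy; rewrite /F.
  case xe: (x \in e); last by rewrite -setI_eq0 set0I.
  case ye: (y \in e); last by rewrite -setI_eq0 setI0.
  apply: disjP => w wx wy.
  have xEy : x \in E :\ y by rewrite in_setD1 xy xE.
  have wEy := nbhd_notin r0 Hu (cEx y ye) wy.
  apply: (key' (E :\ x) ((E :\ y) :|: [set w]) x w (Exsh x xe)).
  - by rewrite inE setUC setD1K ?xE.
  - exact: wx.
  - by apply: contraNneq wEy => <-.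
  - by rewrite inE in wy.
  - by rewrite inE xEy.
  - by rewrite !inE eqxx orbT.
pose A := \bigcup_x F x.
have cA : #|A| = \sum_(x in e) #|nbhd H (E :\ x)|.
  rewrite /A card_disj // [RHS]big_mkcond /=; apply: eq_bigr => x _; rewrite /F.
  by case: (x \in e) => //; rewrite cards0.
have lA : (r.-1) * (2 * n + 1) <= (2 * r + 1) * #|A|.
  rewrite cA big_distrr /= -ce -sum_nat_const; apply: leq_sum => x xe.
  rewrite addn1; exact: Hcod (Exsh x xe).
have Ae : [disjoint A & nbhd H e].
  apply: disjP => w /bigcupP [x _]; rewrite /F.
  case xe: (x \in e); last by rewrite inE.
  move=> wx we.
  have wEx := nbhd_notin r0 Hu (cEx x xe) wx.
  have vEx : v \in E :\ x.
    rewrite in_setD1 !inE eqxx orbT andbT; apply: contraNneq ve => ->; exact: xe.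
  apply: (key' e ((E :\ x) :|: [set w]) v w esh veN we).
  - by apply: contraNneq wEx => <-.
  - by rewrite inE in wx.
  - by rewrite inE vEx.
  - by rewrite !inE eqxx orbT.
have Af : [disjoint A & nbhd H f].
  apply: disjP => w /bigcupP [x _]; rewrite /F.
  case xe: (x \in e); last by rewrite inE.
  move=> wx wf.
  have wEx := nbhd_notin r0 Hu (cEx x xe) wx.
  have vEx : v \in E :\ x.
    rewrite in_setD1 !inE eqxx orbT andbT; apply: contraNneq ve => ->; exact: xe.
  apply: (key' f ((E :\ x) :|: [set w]) v w fsh vfN wf).
  - by apply: contraNneq wEx => <-.
  - by rewrite inE in wx.
  - by rewrite inE vEx.
  - by rewrite !inE eqxx orbT.
pose B := \bigcup_k V k.
have ef : nbhd H e :&: nbhd H f \subset ~: B.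
  apply/subsetP => w; rewrite inE => /andP[we wf]; rewrite inE.
  apply/bigcupP => [[k _ wk]].
  case: (eqVneq k i) => [ki|ki].
  - have kj : k != j by rewrite ki.
    have := fV k; rewrite kj /= => /eqP c1.
    exact: (indep_nbhd r0 Hu (Hind k) cf wf wk c1).
  - have := eV k; rewrite ki /= => /eqP c1.
    exact: (indep_nbhd r0 Hu (Hind k) ce we wk c1).
have cB : #|B| = \sum_k #|V k| by rewrite /B card_disj.
have lB : r * (2 * n + 1) <= (2 * r + 1) * #|B|.
  rewrite cB big_distrr /=.
  have -> : r * (2 * n + 1) = \sum_(k : 'I_r) (2 * n + 1) by rewrite sum_nat_const card_ord.
  apply: leq_sum => k _; rewrite addn1; exact: HV.
have hU : #|A :|: (nbhd H e :|: nbhd H f)| <= n := max_card _.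
have h1 := cardsUI A (nbhd H e :|: nbhd H f).
rewrite setIUr (disjoint_setI0 Ae) (disjoint_setI0 Af) setU0 cards0 addn0 in h1.
have h2 := cardsUI (nbhd H e) (nbhd H f).
have h3 := subset_leq_card ef.
have h4 := cardsC B.
rewrite -/n in h4.
have he := Hcod e esh; have hf := Hcod f fsh.
move: he hf lA lB hU h1 h2 h3 h4.
move: #|A| #|B| #|nbhd H e| #|nbhd H f| #|nbhd H e :&: nbhd H f| #|~: B|
  #|A :|: (nbhd H e :|: nbhd H f)| #|nbhd H e :|: nbhd H f| => a b ne nf d cb u uef.
move=> he hf lA lB hU h1 h2 h3 h4; exfalso.
have r1 : r.-1 = r - 1 by rewrite subn1.
rewrite r1 in lA.
clear -r3 he hf lA lB hU h1 h2 h3 h4.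
exact (@arith r n a b ne nf d cb u uef r3 he hf lA lB hU h1 h2 h3 h4).
Qed.
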